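(* Let $n,s$ be integers with $s \geq n > 0$. Let $Z_1^s,\dots,Z_n^s$ be independent random variables, each geometrically distributed with parameter $1/s$ on $\{1,2,3,\dots\}$ (i.e. $\mathbb{P}(Z_i^s=m)=(1-1/s)^{m-1}(1/s)$ for $m\ge 1$), and let $Y_n^s = \max_{1\le i\leq n} Z_i^s$. Then (1) if $n$ is even, $\mathbb{E}(Y_n^{s}) \leq \frac{n}{2}\cdot \frac{3s^2-2s}{2s-1}$; (2) if $n$ is odd, $\mathbb{E}(Y_n^{s}) \leq \frac{n}{2}\cdot \frac{3s^2-2s}{2s-1} + s$. *)

(* Defs.v *)
From HB Require Import structures.
From mathcomp Require Import all_boot all_order all_algebra.
From mathcomp Require Import all_classical all_reals.
From mathcomp Require Import ereal esum.
Set Implicit Arguments. Unset Strict Implicit. Unset Printing Implicit Defensive.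
Import Order.TTheory GRing.Theory Num.Theory.
Local Open Scope ring_scope.

Definition geom_pmf (R : realType) (p : R) (m : nat) : R :=
  if (0 < m)%N then (1 - p) ^+ m.-1 * p else 0.

Definition geom_joint_pmf (R : realType) (n : nat) (p : R)
  (z : {ffun 'I_n -> nat}) : R :=
  \prod_(i < n) geom_pmf p (z i).

Definition Ymax (n : nat) (z : {ffun 'I_n -> nat}) : nat := \max_(i < n) z i.

(* E(Y_n) for independent geometric(p) Z_i: the (nonnegative, hence
   well-defined in [0,+oo]) sum over all outcomes of Y times the joint pmf. *)
Definition E_max_geom (R : realType) (n : nat) (p : R) : \bar R :=
  (\esum_(z in [set: {ffun 'I_n -> nat}])
     ((Ymax z)%:R * geom_joint_pmf p z)%:E)%classic.

(* Main.v *)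
From HB Require Import structures.
From mathcomp Require Import all_boot all_order all_algebra.
From mathcomp Require Import all_classical all_reals.
From mathcomp Require Import ereal esum.
From mathcomp Require Import ring lra zify.
Require Import Defs.
Set Implicit Arguments. Unset Strict Implicit. Unset Printing Implicit Defensive.
Import Order.TTheory GRing.Theory Num.Theory.
Local Open Scope ring_scope.

Section R.
Variable R : realType.

Lemma bern_even (x : R) (k : nat) : 0 <= x <= 1 ->
  1 - (1 - x) ^+ (k.*2) <= k%:R * (2 * x - x ^+ 2).
Proof.
move=> /andP[x0 x1]; elim: k => [|k IH]; first by rewrite expr0 subrr mul0r.
have -> : (k.+1).*2 = (k.*2 + 2)%N by lia.
rewrite exprD.
have a0 : 0 <= (1 - x) ^+ k.*2 by apply: exprn_ge0; lra.
have a1 : (1 - x) ^+ k.*2 <= 1 by apply: exprn_ile1; lra.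
move: IH a0 a1; set a := (1 - x) ^+ k.*2 => IH a0 a1.
have h : 0 <= (1 - a) * (2 * x - x * x) by apply: mulr_ge0; nra.
rewrite -natr1 !expr2 in IH *. nra.
Qed.

Lemma bern_all (x : R) (n : nat) : 0 <= x <= 1 ->
  1 - (1 - x) ^+ n <= n%:R / 2 * (2 * x - x ^+ 2) + (odd n)%:R * x.
Proof.
move=> hx; have /andP[x0 x1] := hx.
have := bern_even (n./2) hx.
have a0 : 0 <= (1 - x) ^+ (n./2).*2 by apply: exprn_ge0; lra.
have a1 : (1 - x) ^+ (n./2).*2 <= 1 by apply: exprn_ile1; lra.
have y0 : 0 <= 2 * x - x ^+ 2 by rewrite expr2; nra.
have hn := odd_double_half n.
move: a0 a1 y0; set a := (1 - x) ^+ (n./2).*2; set y := 2 * x - x ^+ 2 => a0 a1 y0.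
have -> : n%:R = (odd n)%:R + (n./2)%:R * 2 :> R by rewrite -natrM -natrD muln2 hn.
have -> : (1 - x) ^+ n = (1 - x) ^+ (odd n) * a by rewrite -exprD hn.
clearbody a y.
set k := (n./2)%:R.
have e1 : (1 + k * 2) / 2 * y = y / 2 + k * y by field.
have e0 : (0 + k * 2) / 2 * y = k * y by field.
case: (odd n) => /=; rewrite ?expr1 ?expr0 ?e1 ?e0 => h; clearbody k.
- have h2 : 0 <= x * (1 - a) by apply: mulr_ge0; lra.
  lra.
- lra.
Qed.


Lemma sumq1 (s N : nat) : (0 < s)%N ->
  \sum_(m < N) (1 - s%:R^-1 : R) ^+ m = s%:R * (1 - (1 - s%:R^-1) ^+ N).
Proof.
move=> s0; have sn : (s%:R : R) != 0 by rewrite pnatr_eq0 -lt0n.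
elim: N => [|N IH]; first by rewrite big_ord0 expr0 subrr mulr0.
rewrite big_ord_recr /= IH (exprSr (1 - s%:R^-1) N).
set t := (1 - s%:R^-1) ^+ N. field; by rewrite pnatr_eq0 -lt0n.
Qed.

Lemma alg2a (x : R) : 2 * x - 1 != 0 ->
  0 = (3 * x ^+ 2 - 2 * x) / (2 * x - 1) - 1 * (2 * x - x ^+ 2 / (2 * x - 1) * 1).
Proof. by move=> h; field. Qed.

Lemma alg2b (x t : R) : x != 0 -> 2 * x - 1 != 0 ->
  (3 * x ^+ 2 - 2 * x) / (2 * x - 1) - t * (2 * x - x ^+ 2 / (2 * x - 1) * t)
  + (2 * t - t ^+ 2) =
  (3 * x ^+ 2 - 2 * x) / (2 * x - 1) -
   t * (1 - x^-1) * (2 * x - x ^+ 2 / (2 * x - 1) * (t * (1 - x^-1))).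
Proof. by move=> h1 h2; field; rewrite h1 h2. Qed.

Lemma sumq2 (s N : nat) : (0 < s)%N ->
  \sum_(m < N) (2 * (1 - s%:R^-1 : R) ^+ m - ((1 - s%:R^-1) ^+ m) ^+ 2) =
  (3 * s%:R ^+ 2 - 2 * s%:R) / (2 * s%:R - 1)
   - (1 - s%:R^-1) ^+ N * (2 * s%:R - s%:R ^+ 2 / (2 * s%:R - 1) * (1 - s%:R^-1) ^+ N).
Proof.
move=> s0; have sn : (s%:R : R) != 0 by rewrite pnatr_eq0 -lt0n.
have s1 : (1 : R) <= s%:R by rewrite ler1n.
have s2 : (2 * s%:R - 1 : R) != 0 by apply/eqP; lra.
elim: N => [|N IH]; first by rewrite big_ord0 expr0; apply: alg2a.
rewrite big_ord_recr /= IH (exprSr (1 - s%:R^-1) N).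
exact: alg2b.
Qed.

Lemma sum_geom (p : R) (k : nat) :
  \sum_(j < k.+1) geom_pmf p j = 1 - (1 - p) ^+ k.
Proof.
elim: k => [|k IH]; first by rewrite big_ord1 /geom_pmf /= expr0 subrr.
rewrite big_ord_recr /= IH /geom_pmf /= exprSr; ring.
Qed.


Lemma sum_lt (N M : nat) : \sum_(m < N) ((m < M)%N%:R : R) = (minn N M)%:R.
Proof.
elim: N => [|N IH]; first by rewrite big_ord0 min0n.
rewrite big_ord_recr /= IH -natrD; congr (_%:R).
case: (ltnP N M) => h /=; lia.
Qed.

Lemma ymax_sum (n N : nat) (v : {ffun 'I_n -> nat}) : (forall i, (v i <= N)%N) ->
  (Ymax v)%:R = \sum_(m < N) (1 - \prod_(i < n) ((v i <= m)%N%:R : R)).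
Proof.
move=> hv; have hM : (Ymax v <= N)%N by apply/bigmax_leqP => i _; exact: hv.
rewrite (eq_bigr (fun m : 'I_N => ((m < Ymax v)%N%:R : R))); last first.
  move=> m _; case: (boolP [forall i, v i <= m]%N) => h.
  - rewrite big1; last by move=> i _; rewrite (forallP h).
    suff -> : (m < Ymax v)%N = false by rewrite subrr.
    apply/negbTE; rewrite -leqNgt; apply/bigmax_leqP => i _; exact: (forallP h).
  - move/forallPn: h => [i hi].
    rewrite (bigD1 i) //= (negbTE hi) mul0r subr0.
    suff -> : (m < Ymax v)%N by [].
    have hi' : (m < v i)%N by rewrite ltnNge.
    apply: (leq_trans hi'); rewrite /Ymax.
    by rewrite (bigD1 i) //= leq_maxl.
by rewrite sum_lt; congr (_%:R); lia.
Qed.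

Lemma box_sum (n N : nat) (g : nat -> R) :
 \sum_(y : {ffun 'I_n -> 'I_N.+1}) (Ymax [ffun i => val (y i)])%:R * \prod_(i < n) g (y i)
 = \sum_(m < N) ((\sum_(j < N.+1) g j) ^+ n - (\sum_(j < N.+1) (j <= m)%N%:R * g j) ^+ n).
Proof.
under eq_bigr => y _.
  rewrite (@ymax_sum n N); last by move=> i; rewrite ffunE -ltnS ltn_ord.
  rewrite mulr_suml.
  over.
rewrite exchange_big /=; apply: eq_bigr => m _.
under eq_bigr => y _ do rewrite mulrBl mul1r -big_split /=.
rewrite sumrB.
rewrite [X in _ - X](eq_bigr (fun y : {ffun 'I_n -> 'I_N.+1} => \prod_(i0 < n) (((y i0 <= m)%N)%:R * g (y i0)))) /=; last first.
  by move=> y _; apply: eq_bigr => i _; rewrite ffunE.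
rewrite -(bigA_distr_bigA (fun (i:'I_n) (j:'I_N.+1) => g j)).
rewrite -(bigA_distr_bigA (fun (i:'I_n) (j:'I_N.+1) => ((j <= m)%N)%:R * g j)).
by rewrite !prodr_const card_ord.
Qed.


Lemma box_bound (n s N : nat) : (0 < s)%N ->
 \sum_(y : {ffun 'I_n -> 'I_N.+1}) (Ymax [ffun i => val (y i)])%:R *
     \prod_(i < n) geom_pmf (s%:R^-1 : R) (y i)
 <= n%:R / 2 * ((3 * s%:R ^+ 2 - 2 * s%:R) / (2 * s%:R - 1)) + (odd n)%:R * s%:R.
Proof.
move=> s0; rewrite box_sum sum_geom.
have s1 : (1 : R) <= s%:R by rewrite ler1n.
have sp : (0 : R) < s%:R by lra.
have p0 : (0 : R) < s%:R^-1 by rewrite invr_gt0.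
have p1 : (s%:R^-1 : R) <= 1 by rewrite invf_le1.
have q0 : (0 : R) <= 1 - s%:R^-1 by lra.
have q1 : (1 - s%:R^-1 : R) <= 1 by lra.
have hG : forall m : 'I_N, \sum_(j < N.+1) (j <= m)%N%:R * geom_pmf (s%:R^-1 : R) j
    = 1 - (1 - s%:R^-1) ^+ m.
  move=> m; rewrite (eq_bigr (fun j : 'I_N.+1 => if (j <= m)%N then geom_pmf (s%:R^-1 : R) j else 0)); last first.
    by move=> j _; case: ifP; rewrite ?mul1r ?mul0r.
  rewrite -big_mkcond /= -(sum_geom _ m).
  have hmN : (m.+1 <= N.+1)%N by rewrite ltnS ltnW.
  have e := @big_ord_widen_cond R 0 +%R m.+1 N.+1 xpredT (geom_pmf (s%:R^-1 : R)) hmN.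
  apply: esym; apply: eq_trans e _; apply: eq_bigl => j /=; by rewrite ltnS.
apply: (@le_trans _ _ (\sum_(m < N) (n%:R / 2 * (2 * (1 - s%:R^-1) ^+ m - ((1 - s%:R^-1) ^+ m) ^+ 2)
     + (odd n)%:R * (1 - s%:R^-1) ^+ m))).
  apply: ler_sum => m _; rewrite hG.
  have x0 : (0 : R) <= (1 - s%:R^-1) ^+ m by apply: exprn_ge0.
  have x1 : ((1 - s%:R^-1) ^+ m : R) <= 1 by apply: exprn_ile1.
  have hb := @bern_all ((1 - s%:R^-1) ^+ m) n (introT andP (conj x0 x1)).
  have t0 : (0 : R) <= 1 - (1 - s%:R^-1) ^+ N.
    have : ((1 - s%:R^-1) ^+ N : R) <= 1 by apply: exprn_ile1.
    lra.
  have t1 : (1 - (1 - s%:R^-1) ^+ N : R) <= 1.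
    have : (0 : R) <= (1 - s%:R^-1) ^+ N by apply: exprn_ge0.
    lra.
  have tn : ((1 - (1 - s%:R^-1) ^+ N) ^+ n : R) <= 1 by apply: exprn_ile1.
  lra.
rewrite big_split /= -!mulr_sumr sumq2 // sumq1 //.
set t := (1 - s%:R^-1) ^+ N.
have t0 : (0 : R) <= t by apply: exprn_ge0.
have t1 : (t : R) <= 1 by apply: exprn_ile1.
set c := s%:R ^+ 2 / (2 * s%:R - 1).
have cs : c <= s%:R.
  rewrite /c ler_pdivrMr; last by lra.
  rewrite expr2; nra.
have X0 : 0 <= t * (2 * s%:R - c * t).
  apply: mulr_ge0 => //; nra.
have A0 : (0 : R) <= n%:R / 2 by apply: divr_ge0; rewrite ?ler0n.
have B0 : (0 : R) <= (odd n)%:R by rewrite ler0n.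
have Y0 : 0 <= n%:R / 2 * (t * (2 * s%:R - c * t)) by apply: mulr_ge0.
have Z0 : 0 <= (odd n)%:R * (s%:R * t) by apply: mulr_ge0 => //; apply: mulr_ge0 => //; lra.
set M := (3 * s%:R ^+ 2 - 2 * s%:R) / (2 * s%:R - 1).
move: Y0 Z0; set A := n%:R / 2; set B := (odd n)%:R : R; set S := s%:R : R.
set X := t * (2 * S - c * t) => Y0 Z0.
have -> : A * (M - X) + B * (S * (1 - t)) = A * M + B * S - A * X - B * (S * t) by ring.
lra.
Qed.

Lemma key (n s : nat) : (0 < s)%N ->
  (E_max_geom n (s%:R^-1 : R) <=
   (n%:R / 2 * ((3 * s%:R ^+ 2 - 2 * s%:R) / (2 * s%:R - 1)) + (odd n)%:R * s%:R)%:E)%E.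
Proof.
move=> s0.
have s1 : (1 : R) <= s%:R by rewrite ler1n.
have p0 : (0 : R) < s%:R^-1 by rewrite invr_gt0; lra.
have p1 : (s%:R^-1 : R) <= 1 by rewrite invf_le1 //; lra.
have g0 : forall j, (0 : R) <= geom_pmf (s%:R^-1 : R) j.
  move=> j; rewrite /geom_pmf; case: ifP => _ //.
  apply: mulr_ge0; last lra; apply: exprn_ge0; lra.
rewrite /E_max_geom; apply: ge_ereal_sup => _ [X [finX _] <-].
rewrite fsbig_finite //= sumEFin lee_fin.
set r := finmap.enum_fset (fset_set X).
have ur : uniq r by apply: finmap.fset_uniq.
set N := (\max_(z <- r) Ymax z)%N.
have hz : forall z, z \in r -> forall i, (z i <= N)%N.
  move=> z zr i; apply: (@leq_trans (Ymax z)).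
    by rewrite /Ymax (bigD1 i) //= leq_maxl.
  exact: (@leq_bigmax_seq _ r xpredT (fun z => Ymax z) z zr).
pose phi (z : {ffun 'I_n -> nat}) : {ffun 'I_n -> 'I_N.+1} := [ffun i => inord (z i)].
have phiK : forall z, z \in r -> [ffun i => val (phi z i)] = z.
  by move=> z zr; apply/ffunP => i; rewrite !ffunE /= inordK // ltnS hz.
pose G (y : {ffun 'I_n -> 'I_N.+1}) : R := (Ymax [ffun i => val (y i)])%:R *
     \prod_(i < n) geom_pmf (s%:R^-1 : R) (y i).
have G0 : forall y, 0 <= G y.
  move=> y; apply: mulr_ge0; first by rewrite ler0n.
  by apply: prodr_ge0 => i _.
rewrite (eq_big_seq (fun z => G (phi z))); last first.
  move=> z zr; rewrite /G phiK //; congr (_ * _); rewrite /geom_joint_pmf.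
  by apply: eq_bigr => i _; rewrite ffunE inordK // ltnS hz.
rewrite -(big_map phi xpredT G) big_uniq; last first.
  rewrite map_inj_in_uniq // => x y xr yr e.
  by rewrite -(phiK x xr) -(phiK y yr) e.
apply: le_trans (box_bound n N s0).
rewrite big_mkcond /=; apply: ler_sum => y _; case: ifP => _ //; exact: G0.
Qed.

End R.

Unset Implicit Arguments.
Theorem proposition5p1 (R : realType) (n s : nat) (hn : (0 < n)%N) (hsn : (n <= s)%N) :
  (~~ odd n ->
     (E_max_geom n (s%:R^-1 : R) <=
        ((n%:R / 2) * ((3 * s%:R ^+ 2 - 2 * s%:R) / (2 * s%:R - 1)))%:E)%E) /\
  (odd n ->
     (E_max_geom n (s%:R^-1 : R) <=
        ((n%:R / 2) * ((3 * s%:R ^+ 2 - 2 * s%:R) / (2 * s%:R - 1)) + s%:R)%:E)%E).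
Proof.
have s0 : (0 < s)%N by apply: leq_trans hsn.
have k := @key R n s s0.
split => h.
- by move: k; rewrite (negbTE h) mul0r addr0.
- by move: k; rewrite h mul1r.
Qed.
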